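(* Let $\Omega\subset\mathbb R^d$ be compact and let $m\ge2$ be an integer. Then the set of restrictions to $\Omega$ of the maps $$\mathbf x\mapsto\mathbf W^T\boldsymbol\sigma(\mathbf W\mathbf x),\qquad p\in\mathbb N,\ \mathbf W\in\mathbb R^{p\times d},\ \sigma_i\in\mathcal{LS}^m_{\uparrow}(\mathbb R),$$ is dense in $\mathcal E(\Omega)$ with respect to the norm $\|\mathbf f\|_{C(\Omega)}=\sup_{\mathbf x\in\Omega}\|\mathbf f(\mathbf x)\|$.
   Context: $\boldsymbol\sigma$ acts componentwise: $(\boldsymbol\sigma(\mathbf z))_i=\sigma_i(z_i)$. $\mathcal{LS}^m_{\uparrow}(\mathbb R)$ is the set of increasing continuous piecewise-linear functions (linear splines) $\mathbb R\to\mathbb R$ with at most $m$ knots. $C^{0,1}_{\uparrow}(\mathbb R)$ denotes the set of Lipschitz-continuous increasing functions $\mathbb R\to\mathbb R$. $\mathcal E(\mathbb R^d)$ is the set of maps $\mathbf x\mapsto\mathbf W^T\boldsymbol\sigma(\mathbf W\mathbf x)$ with $p\in\mathbb N$, $\mathbf W\in\mathbb R^{p\times d}$ and each $\sigma_i\in C^{0,1}_{\uparrow}(\mathbb R)$; $\mathcal E(\Omega)$ is the set of restrictions to $\Omega$ of elements of $\mathcal E(\mathbb R^d)$. *)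

(* Defs.v *)
From HB Require Import structures.
From mathcomp Require Import all_boot all_order all_algebra.
From mathcomp Require Import all_classical all_reals all_analysis.
Set Implicit Arguments. Unset Strict Implicit. Unset Printing Implicit Defensive.
Import Order.TTheory GRing.Theory Num.Theory.
Import numFieldNormedType.Exports.
Local Open Scope ring_scope.
Local Open Scope classical_set_scope.

Definition eucl_norm (R : realType) (d : nat) (v : 'cV[R]_d) : R :=
  Num.sqrt (\sum_(i < d) (v i 0) ^+ 2).

(* increasing (= nondecreasing) functions R -> R *)
Definition nondecr_fun (R : realType) (s : R -> R) : Prop :=
  forall x y : R, x <= y -> s x <= s y.

Definition lip_incr (R : realType) (s : R -> R) : Prop :=
  (exists L : R, forall x y : R, `|s x - s y| <= L * `|x - y|) /\ nondecr_fun s.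

(* LS^m_increasing(R): increasing continuous piecewise-linear functions with at
   most m knots: there is a list of at most m knots such that s is affine on
   every closed interval containing no knot in its interior. *)
Definition lin_spline_incr (R : realType) (m : nat) (s : R -> R) : Prop :=
  continuous s /\ nondecr_fun s /\
  exists knots : seq R, (size knots <= m)%N /\
    forall a b : R, a <= b ->
      (forall t, t \in knots -> ~ (a < t /\ t < b)) ->
      forall l : R, 0 <= l -> l <= 1 ->
        s ((1 - l) * a + l * b) = (1 - l) * s a + l * s b.

Definition sigma_vec (R : realType) (p : nat) (sig : 'I_p -> R -> R)
  (z : 'cV[R]_p) : 'cV[R]_p := \col_i sig i (z i 0).

Definition grad_map (R : realType) (d p : nat) (W : 'M[R]_(p, d))
  (sig : 'I_p -> R -> R) (x : 'cV[R]_d) : 'cV[R]_d :=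
  W^T *m sigma_vec sig (W *m x).

(* Main.v *)
Require Import Defs.
From HB Require Import structures.
From mathcomp Require Import all_boot all_order all_algebra.
From mathcomp Require Import all_classical all_reals all_analysis.
From mathcomp Require Import ring lra.
Import Order.TTheory GRing.Theory Num.Theory.
Import numFieldNormedType.Exports.
Local Open Scope ring_scope.
Local Open Scope classical_set_scope.

Section Clamp.
Variable R : realType.
Definition clamp (a b x : R) : R := Num.min (Num.max x a) b.

Lemma clamp_id a b x : a <= x -> x <= b -> clamp a b x = x.
Proof. by move=> ax xb; rewrite /clamp max_l // min_l. Qed.
Lemma clamp_lo a b x : x <= a -> a <= b -> clamp a b x = a.
Proof. by move=> xa ab; rewrite /clamp max_r // min_l. Qed.
Lemma clamp_hi a b x : b <= x -> a <= b -> clamp a b x = b.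
Proof. by move=> bx ab; rewrite /clamp max_l ?(le_trans ab) // min_r. Qed.
Arguments clamp_id {a b x}. Arguments clamp_lo {a b x}. Arguments clamp_hi {a b x}.
Lemma clamp_ge a b x : a <= b -> a <= clamp a b x.
Proof.
move=> ab; case: (lerP x a) => xa; first by rewrite clamp_lo.
case: (lerP b x) => bx; first by rewrite clamp_hi.
by rewrite clamp_id ?ltW.
Qed.
Lemma clamp_le a b x : a <= b -> clamp a b x <= b.
Proof.
move=> ab; case: (lerP x a) => xa; first by rewrite clamp_lo.
case: (lerP b x) => bx; first by rewrite clamp_hi.
by rewrite clamp_id ?ltW.
Qed.
Lemma clamp_mono a b x y : x <= y -> clamp a b x <= clamp a b y.
Proof. by move=> xy; rewrite /clamp le_min2 // le_max2. Qed.

Lemma clamp_cont a b : continuous (clamp a b).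
Proof.
move=> x; apply: (@continuous_min R R (fun t => Num.max t a) (fun=> b)).
  apply: (@continuous_max R R (fun t => t) (fun=> a)) => //.
  exact: cst_continuous.
exact: cst_continuous.
Qed.

Lemma spline_clamp (m : nat) (a b c s : R) : (2 <= m)%N -> a <= b -> 0 <= s ->
  lin_spline_incr m (fun t => c + s * clamp a b t).
Proof.
move=> m2 ab s0; split.
  move=> x; apply: cvgD; first exact: cvg_cst.
  apply: cvgM; first exact: cvg_cst.
  exact: clamp_cont.
split.
  by move=> x y xy; rewrite lerD2l ler_wpM2l // clamp_mono.
exists [:: a; b]; split; first by [].
move=> a' b' ab' nk l l0 l1.
set z := (1 - l) * a' + l * b'.
have za : a' <= z by rewrite /z; nra.
have zb : z <= b' by rewrite /z; nra.
suff [k [e Hk]] : exists k e, forall y, a' <= y <= b' -> clamp a b y = k * y + e.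
  rewrite !Hk ?za ?zb ?lexx ?ab' //; rewrite /z; ring.
have na : ~ (a' < a /\ a < b') by apply: nk; rewrite !inE eqxx ?orbT.
have nb : ~ (a' < b /\ b < b') by apply: nk; rewrite !inE eqxx ?orbT.
case: (lerP b' a) => b'a.
  exists 0, a => y /andP[_ yb]; rewrite clamp_lo ?(le_trans yb) //; ring.
have aa' : a <= a'.
  by rewrite leNgt; apply/negP => aa; apply: na.
case: (lerP b a') => ba'.
  exists 0, b => y /andP[ay _]; rewrite clamp_hi ?(le_trans ba') //; ring.
have bb' : b' <= b.
  by rewrite leNgt; apply/negP => bb; apply: nb.
exists 1, 0 => y /andP[ay yb]; rewrite clamp_id ?(le_trans aa') ?(le_trans yb) //; ring.
Qed.

Section Approx.
Variables (sig : R -> R) (L a h : R).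
Hypothesis sig_mono : forall x y, x <= y -> sig x <= sig y.
Hypothesis sig_lip : forall x y, `|sig x - sig y| <= L * `|x - y|.
Hypothesis h0 : 0 < h.

Definition tk (k : nat) : R := a + k%:R * h.
Definition term (k : nat) (x : R) : R :=
  (sig (tk k.+1) - sig (tk k)) / h * (clamp (tk k) (tk k.+1) x - tk k).
Definition Ssum (n : nat) (x : R) : R := sig (tk 0) + \sum_(k < n) term k x.

Lemma tkS k : tk k.+1 = tk k + h.
Proof. by rewrite /tk -natr1 mulrDl mul1r addrA. Qed.
Lemma tk_mono k k' : (k <= k')%N -> tk k <= tk k'.
Proof. by move=> kk; rewrite /tk lerD2l ler_wpM2r ?ler_nat // ltW. Qed.

Lemma Lh0 : 0 <= L * h.
Proof.
have := sig_lip (a + h) a; have -> : a + h - a = h by ring.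
rewrite (gtr0_norm h0) => H.
exact: le_trans (normr_ge0 _) H.
Qed.

Lemma approx_ind n x : (tk n <= x -> Ssum n x = sig (tk n)) /\
  `|Ssum n x - sig (clamp (tk 0) (tk n) x)| <= L * h.
Proof.
elim: n => [|n [IH1 IH2]].
  rewrite /Ssum big_ord0 addr0; split => // .
  have -> : clamp (tk 0) (tk 0) x = tk 0.
    by case: (lerP x (tk 0)) => xt; [exact: clamp_lo | exact: clamp_hi (ltW xt) (lexx _)].
  by rewrite subrr normr0 Lh0.
have SS : Ssum n.+1 x = Ssum n x + term n x by rewrite /Ssum big_ord_recr /= addrA.
have t01 : tk 0 <= tk n by apply: tk_mono.
have tn1 : tk n <= tk n.+1 by rewrite tkS lerDl ltW.
case: (lerP (tk n) x) => xn; last first.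
  rewrite SS.
  have -> : term n x = 0 by rewrite /term (clamp_lo (ltW xn) tn1) subrr mulr0.
  have -> : clamp (tk 0) (tk n.+1) x = clamp (tk 0) (tk n) x.
    case: (lerP x (tk 0)) => x0; first by rewrite !clamp_lo // (le_trans t01).
    by rewrite !clamp_id // ltW // (lt_le_trans xn).
  rewrite addr0; split => // H; exfalso.
  by have := lt_le_trans xn (le_trans tn1 H); rewrite ltxx.
set c := clamp (tk n) (tk n.+1) x.
have -> : clamp (tk 0) (tk n.+1) x = c.
  rewrite /c; case: (lerP x (tk n.+1)) => x1.
    by rewrite !clamp_id // (le_trans t01).
  by rewrite (clamp_hi (ltW x1) (le_trans t01 tn1)) (clamp_hi (ltW x1) tn1).
rewrite SS IH1 //.
set D := sig (tk n.+1) - sig (tk n).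
have hE : tk n.+1 - tk n = h by rewrite tkS addrAC subrr add0r.
split.
  move=> x1; rewrite /term clamp_hi // hE -/D mulfVK ?gt_eqF //.
  by rewrite /D addrC subrK.
have cn : tk n <= c by apply: clamp_ge.
have cn1 : c <= tk n.+1 by apply: clamp_le.
set th := (c - tk n) / h.
have th0 : 0 <= th by rewrite /th divr_ge0 ?subr_ge0 // ltW.
have th1 : th <= 1.
  by rewrite /th ler_pdivrMr // mul1r lerBlDl -tkS.
have ET : term n x = D * th by rewrite /term -/c /th -/D mulrAC mulrA.
have D0 : 0 <= D by rewrite subr_ge0 sig_mono.
have sc0 : sig (tk n) <= sig c by apply: sig_mono.
have sc1 : sig c <= sig (tk n.+1) by apply: sig_mono.
have Dth0 : 0 <= D * th by apply: mulr_ge0.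
have Dth1 : D * th <= D by rewrite ler_piMr.
have DL : D <= L * h.
  have := sig_lip (tk n.+1) (tk n); rewrite hE (gtr0_norm h0) => H.
  exact: le_trans (ler_norm _) H.
rewrite ET; apply: le_trans DL; rewrite ler_norml.
have : sig (tk n.+1) = sig (tk n) + D by rewrite /D addrC subrK.
move=> E1; apply/andP; split; lra.
Qed.
End Approx.
End Clamp.
Lemma single_le (R : realType) (I : finType) (F : I -> R) (i : I) :
  (forall j, 0 <= F j) -> F i <= \sum_j F j.
Proof.
move=> F0; rewrite (bigD1 i) //= lerDl; exact: sumr_ge0.
Qed.

Lemma range_bound (R : realType) (d p : nat) (Omega : set 'cV[R]_d) (W : 'M[R]_(p, d)) :
  compact Omega -> exists B : R, 0 < B /\
    forall x, Omega x -> forall i, `|(W *m x) i 0| <= B.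
Proof.
move=> cO; have [M0 [M0r HM0]] := compact_bounded cO.
have M1 : M0 < M0 + 1 by rewrite ltrDl.
have HM := HM0 _ M1.
set C := \sum_i \sum_j `|W i j|.
have C0 : 0 <= C by apply: sumr_ge0 => i _; apply: sumr_ge0.
exists (1 + C * `|M0 + 1|); split.
  by apply: (lt_le_trans ltr01); rewrite lerDl mulr_ge0.
move=> x Ox i; suff H : `|(W *m x) i 0| <= C * `|M0 + 1| by apply: le_trans H _; rewrite lerDr.
have xM : forall j, `|x j 0| <= `|M0 + 1|.
  move=> j; apply: le_trans (ler_norm _).
  apply: le_trans (HM x Ox).
  have -> : `|x| = mx_norm x by [].
  rewrite mx_normrE.
  exact: (le_bigmax _ (fun ij : 'I_d * 'I_1 => `|x ij.1 ij.2|) (j, 0)).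
rewrite mxE; apply: le_trans (ler_norm_sum _ _ _) _.
apply: (@le_trans _ _ (\sum_j `|W i j| * `|M0 + 1|)).
  by apply: ler_sum => j _; rewrite normrM ler_wpM2l.
rewrite -mulr_suml ler_wpM2r //.
rewrite /C; apply: (@single_le _ _ (fun i0 => \sum_j `|W i0 j|) i) => k; apply: sumr_ge0 => j _; exact: normr_ge0.
Qed.

Definition slope (R : realType) (sig : R -> R) (a h : R) (k : nat) : R :=
  (sig (tk R a h k.+1) - sig (tk R a h k)) / h.
Definition tauk (R : realType) (sig : R -> R) (a h : R) (N k : nat) (t : R) : R :=
  (sig (tk R a h 0) / N%:R - slope R sig a h k * tk R a h k)
  + slope R sig a h k * clamp R (tk R a h k) (tk R a h k.+1) t.

Lemma tauk_sum (R : realType) (sig : R -> R) (a h : R) (N : nat) t : (0 < N)%N ->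
  \sum_(k < N) tauk R sig a h N k t = Ssum R sig a h N t.
Proof.
move=> N0; rewrite /Ssum.
rewrite (eq_bigr (fun k : 'I_N => sig (tk R a h 0) / N%:R + term R sig a h k t)); last first.
  by move=> k _; rewrite /tauk /term /slope; ring.
rewrite big_split /= sumr_const card_ord; congr (_ + _).
by rewrite -(mulr_natr (sig _ / _) N) divfK // pnatr_eq0 -lt0n.
Qed.

Lemma tauk_spline (R : realType) (sig : R -> R) (a h : R) (N k m : nat) :
  (forall x y, x <= y -> sig x <= sig y) -> 0 < h -> (2 <= m)%N ->
  lin_spline_incr m (tauk R sig a h N k).
Proof.
move=> mono h0 m2; apply: spline_clamp => //.
  by rewrite tkS lerDl ltW.
by rewrite /slope divr_ge0 ?subr_ge0 ?mono // ?tkS ?lerDl ltW.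
Qed.

Lemma approx_final (R : realType) (sig : R -> R) (L B : R) (N : nat) :
  (forall x y, x <= y -> sig x <= sig y) ->
  (forall x y, `|sig x - sig y| <= L * `|x - y|) ->
  0 < B -> (0 < N)%N -> forall y, `|y| <= B ->
  `|sig y - Ssum R sig (- B) (2 * B / N%:R) N y| <= L * (2 * B / N%:R).
Proof.
move=> mono lip B0 N0 y yB.
have h0 : 0 < 2 * B / N%:R by rewrite divr_gt0 ?mulr_gt0 // ltr0n.
have [_ H] := @approx_ind R sig L (- B) _ mono lip h0 N y.
have e0 : tk R (- B) (2 * B / N%:R) 0 = - B by rewrite /tk mul0r addr0.
have eN : tk R (- B) (2 * B / N%:R) N = B.
  rewrite /tk mulrCA divff ?mulr1 ?pnatr_eq0 -?lt0n //; ring.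
rewrite e0 eN clamp_id in H; first by rewrite distrC.
  by move: yB; rewrite ler_norml => /andP[].
by move: yB; rewrite ler_norml => /andP[].
Qed.

Theorem proposition4 (R : realType) (d m : nat) (Omega : set 'cV[R]_d) :
  compact Omega -> (2 <= m)%N ->
  forall (p : nat) (W : 'M[R]_(p, d)) (sig : 'I_p -> R -> R),
    (forall i, lip_incr (sig i)) ->
    forall eps : R, 0 < eps ->
    exists (q : nat) (V : 'M[R]_(q, d)) (tau : 'I_q -> R -> R),
      (forall i, lin_spline_incr m (tau i)) /\
      (forall x, Omega x ->
         eucl_norm (grad_map W sig x - grad_map V tau x) <= eps).
Proof.
move=> cO m2 p W sig Hsig eps eps0.
have [B [B0 HB]] := @range_bound R d p Omega W cO.
have [Lf HL] := choice (fun i => (Hsig i).1).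
have mono : forall i, forall x y, x <= y -> sig i x <= sig i y by move=> i; exact: (Hsig i).2.
set Lm := 1 + \sum_i `|Lf i|.
have Lm0 : 0 < Lm by rewrite /Lm ltr_pwDl // sumr_ge0.
have HLm : forall i x y, `|sig i x - sig i y| <= Lm * `|x - y|.
  move=> i x y; apply: le_trans (HL i x y) _; apply: ler_wpM2r => //.
  apply: le_trans (ler_norm _) _; rewrite /Lm.
  apply: le_trans (@single_le _ _ (fun j => `|Lf j|) i _) _ => //.
  by rewrite lerDr.
set Cw := \sum_i \sum_k `|W i k|.
have Cw0 : 0 <= Cw by apply: sumr_ge0 => i _; apply: sumr_ge0.
set D : R := d%:R.
have D0 : 0 <= D by rewrite /D ler0n.
set e1 := eps / (D + 1).
have e10 : 0 < e1 by rewrite /e1 divr_gt0 // ltr_wpDl.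
set del := e1 / (Cw + 1).
have del0 : 0 < del by rewrite /del divr_gt0 // ltr_wpDl.
set N := (Num.bound (2 * B * Lm / del)).+1.
have N0 : (0 < N)%N by [].
set h := 2 * B / N%:R.
have h0 : 0 < h by rewrite /h divr_gt0 ?mulr_gt0 // ltr0n.
have Lhdel : Lm * h <= del.
  have -> : Lm * h = (2 * B * Lm / del) * del / N%:R.
    rewrite /h; field; rewrite ?pnatr_eq0 ?gt_eqF //.
  rewrite ler_pdivrMr ?ltr0n // mulrC ler_wpM2l ?ltW //.
  apply: lt_le_trans (archi_boundP _) _.
    by apply/ltW; rewrite divr_gt0 // !mulr_gt0.
  by rewrite ler_nat.
pose T := ('I_p * 'I_N)%type.
pose V : 'M[R]_(#|{: T}|, d) := \matrix_(j, c) W (enum_val j).1 c.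
pose tau := fun j : 'I_#|{: T}| => tauk R (sig (enum_val j).1) (- B) h N (enum_val j).2.
exists #|{: T}|, V, tau; split.
  by move=> j; apply: tauk_spline => //; apply: mono.
move=> x Ox.
set y := W *m x.
have Vx : forall j, (V *m x) j 0 = y (enum_val j).1 0.
  by move=> j; rewrite /y !mxE; apply: eq_bigr => c _; rewrite mxE.
have entry : forall k, `|(grad_map W sig x - grad_map V tau x) k 0| <= e1.
  move=> k.
  have E : (grad_map W sig x - grad_map V tau x) k 0 = \sum_i W i k *
      (sig i (y i 0) - Ssum R (sig i) (- B) h N (y i 0)).
    rewrite /grad_map -/y; set z := V *m x.
    rewrite /sigma_vec [LHS]mxE [X in _ + X]mxE !mxE.
    rewrite (eq_bigr (fun i => W i k * sig i (y i 0))); last first.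
      by move=> i _; rewrite !mxE.
    rewrite (eq_bigr (fun j => W (enum_val j).1 k * tau j (y (enum_val j).1 0))); last first.
      by move=> j _; rewrite !mxE; congr (_ * tau j _); apply: eq_bigr => c _; rewrite mxE.
    rewrite /tau -(big_enum_val (fun u : T => W u.1 k * tauk R (sig u.1) (- B) h N u.2 (y u.1 0))) /=.
    rewrite (eq_bigl (fun _ => true)) //.
    rewrite -(pair_big predT predT (fun (i : 'I_p) (n : 'I_N) => W i k * tauk R (sig i) (- B) h N n (y i 0))) /=.
    rewrite -sumrB; apply: eq_bigr => i _.
    by rewrite -mulr_sumr -mulrBr tauk_sum.
  rewrite E; apply: le_trans (ler_norm_sum _ _ _) _.
  apply: (@le_trans _ _ (\sum_i `|W i k| * del)).
    apply: ler_sum => i _; rewrite normrM; apply: ler_wpM2l => //.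
    apply: le_trans Lhdel; rewrite /h; apply: approx_final.
    - exact: mono.
    - exact: (HLm i).
    - exact: B0.
    - exact: N0.
    - exact: HB.
  rewrite -mulr_suml.
  apply: (@le_trans _ _ (Cw * del)).
    apply: ler_wpM2r; first exact: ltW.
    rewrite /Cw; apply: ler_sum => i _.
    by apply: (@single_le _ _ (fun k' => `|W i k'|) k) => k'.
  have Cw1 : 0 < Cw + 1 by rewrite ltr_wpDl.
  rewrite /del mulrCA -[X in _ <= X]mulr1; apply: ler_wpM2l; first exact: ltW.
  by rewrite ler_pdivrMr // mul1r lerDl.
have He : eps = e1 * (D + 1) by rewrite /e1 divfK // gt_eqF // ltr_wpDl.
have H : \sum_(k < d) ((grad_map W sig x - grad_map V tau x) k 0) ^+ 2 <= eps ^+ 2.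
  apply: (@le_trans _ _ (\sum_(k < d) e1 ^+ 2)).
    apply: ler_sum => k _; have := entry k; rewrite ler_norml => /andP[a b]; nra.
  rewrite sumr_const card_ord -mulr_natr -/D He; nra.
rewrite /eucl_norm -(ger0_norm (ltW eps0)) -sqrtr_sqr ler_sqrt //; exact: sqr_ge0.
Qed.
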